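(* Fix an integer $q\ge 2$ and let $a_1/b_1<a_2/b_2<\dots<a_m/b_m=1$ be the elements (in lowest terms, with positive integers $a_k,b_k$) of the set of reduced fractions $a/b\le 1$ with $2\le a+b\le q$. Let $n=4\sum_{k=1}^m b_k$ and define binary sequences of length $n$ $$S=0^{b_1+a_1}1^{b_1-a_1}0^{b_2+a_2}1^{b_2-a_2}\cdots 0^{b_m+a_m}1^{b_m-a_m}\;0^{b_m-a_m}1^{b_m+a_m}\cdots 0^{b_1-a_1}1^{b_1+a_1},\qquad T=1^{n/2}0^{n/2}.$$ For $1\le r\le m$ let $j(r)=\sum_{k=r}^m 2b_k$ and $j(m+1)=0$. For $1\le r\le m+1$ let $\Gamma_r$ be the alignment of $S$ and $T$ in which the first $j(r)$ occurrences of $0$ in $S$ are aligned with spaces, the remaining $n-j(r)$ characters of $S$ are aligned in order, without spaces, with the first $n-j(r)$ characters of $T$, and the last $j(r)$ characters of $T$ are aligned with spaces (so $\Gamma_{m+1}$ is the alignment with no spaces). Then for every alignment $\Gamma$ of $S$ and $T$ and every $\beta\ge 0$, there is some $r\in\{1,\dots,m+1\}$ such that $\mathrm{score}_{(0,\beta)}(\Gamma_r)\ge \mathrm{score}_{(0,\beta)}(\Gamma)$.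
   Context: An alignment of sequences $S,T$ is a pair $(S',T')$ of equal-length strings obtained by inserting space symbols ''$-$'' into $S$ and $T$, with no position having spaces in both. Its summary is $(w,x,y)$, with $w$ the number of positions with equal characters (matches), $x$ the number of positions with different characters (mismatches), and $y$ the number of positions with a space. For parameters $(\alpha,\beta)$, $\mathrm{score}_{(\alpha,\beta)}(\Gamma)=w-\alpha x-\beta y$; in particular $\mathrm{score}_{(0,\beta)}(\Gamma)=w-\beta y$. *)

(* Defs.v *)
From mathcomp Require Import all_boot all_order all_algebra.
From mathcomp Require Import reals.
Set Implicit Arguments. Unset Strict Implicit. Unset Printing Implicit Defensive.
Import Order.TTheory GRing.Theory Num.Theory.

(* A column of an alignment: [None] denotes the space symbol "-". *)
Definition column := (option bool * option bool)%type.

(* An alignment of S and T, given as the list of its columns (S'_i, T'_i):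
   erasing spaces from the top row gives S, from the bottom row gives T,
   and no column has spaces in both rows. *)
Definition is_alignment (S T : seq bool) (al : seq column) : Prop :=
  [/\ pmap id (map fst al) = S, pmap id (map snd al) = T &
      all (fun c : column => (c.1 != None) || (c.2 != None)) al].

Definition is_match (c : column) : bool :=
  match c with (Some x, Some y) => x == y | _ => false end.
Definition is_mismatch (c : column) : bool :=
  match c with (Some x, Some y) => x != y | _ => false end.
Definition is_space (c : column) : bool := (c.1 == None) || (c.2 == None).

Definition nmatch (al : seq column) := count is_match al.
Definition nmismatch (al : seq column) := count is_mismatch al.
Definition nspace (al : seq column) := count is_space al.

Local Open Scope ring_scope.
Definition score {R : realType} (alpha beta : R) (al : seq column) : R :=
  (nmatch al)%:R - alpha * (nmismatch al)%:R - beta * (nspace al)%:R.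
Local Close Scope ring_scope.

Definition frac_lt (p p' : nat * nat) : bool := p.1 * p'.2 < p'.1 * p.2.

Definition Sseq (fr : seq (nat * nat)) : seq bool :=
  flatten [seq nseq (p.2 + p.1) false ++ nseq (p.2 - p.1) true | p <- fr] ++
  flatten [seq nseq (p.2 - p.1) false ++ nseq (p.2 + p.1) true | p <- rev fr].

Definition nlen (fr : seq (nat * nat)) : nat := 4 * sumn (map snd fr).

Definition Tseq (fr : seq (nat * nat)) : seq bool :=
  nseq (nlen fr %/ 2) true ++ nseq (nlen fr %/ 2) false.

Fixpoint build (j : nat) (s t : seq bool) : seq column :=
  match s with
  | [::] => map (fun c => (None, Some c)) t
  | c :: s' =>
      if (~~ c) && (0 < j) then (Some c, None) :: build j.-1 s' t
      else match t with
           | x :: t' => (Some c, Some x) :: build j s' t'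
           | [::] => (Some c, None) :: build j s' [::]
           end
  end.

(* j for the (0-indexed) r, r = 0..m, corresponding to the paper's r+1:
   j = sum_{k=r+1}^m 2 b_k (so r = m gives 0). *)
Definition jidx (fr : seq (nat * nat)) (r : nat) : nat :=
  2 * sumn (map snd (drop r fr)).

Definition Gamma (fr : seq (nat * nat)) (r : nat) : seq column :=
  build (jidx fr r) (Sseq fr) (Tseq fr).

(* Main.v *)
Require Import Defs.
From mathcomp Require Import all_boot all_order all_algebra.
From mathcomp Require Import reals.
From mathcomp Require Import zify ring lra.
Import Order.TTheory GRing.Theory Num.Theory.

Definition phi (X : seq bool) (t : nat) := (count id (take t X) + count negb (drop t X))%N.

Arguments phi : simpl never.

Lemma phi_cons x Z t : phi (x :: Z) t.+1 = (x + phi Z t)%N.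
Proof. by rewrite /phi /= addnA; case: x. Qed.

Lemma phi0 Z : phi Z 0 = count negb Z.
Proof. by rewrite /phi take0 drop0. Qed.

Lemma phi_cat_ge B X t : phi (B ++ X) (size B + t) = (count id B + phi X t)%N.
Proof.
elim: B => [|x B IH] /=; first by [].
by rewrite addSn phi_cons IH addnA.
Qed.

Lemma phi_cat_le B X t : (t <= size B)%N -> phi (B ++ X) t = (phi B t + count negb X)%N.
Proof.
elim: B t => [|x B IH] [|t] //=.
- by move=> _; rewrite !phi0.
- by move=> _; rewrite !phi0 /= count_cat addnA.
- by move=> h; rewrite !phi_cons IH // addnA.
Qed.

Lemma phi_false c t : (t <= c)%N -> phi (nseq c false) t = (c - t)%N.
Proof.
elim: c t => [|c IH] [|t] //=.
- by rewrite phi0 /= count_nseq /= mul1n.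
- by move=> h; rewrite phi_cons IH.
Qed.

Lemma phi_true d t : (t <= d)%N -> phi (nseq d true) t = t.
Proof.
elim: d t => [|d IH] [|t] //=.
- by rewrite phi0 /= count_nseq /= mul0n.
- by move=> h; rewrite phi_cons IH.
Qed.

Lemma phi_block c d t : (t <= c + d)%N ->
  phi (nseq c false ++ nseq d true) t = (if (t <= c)%N then c - t else t - c)%N.
Proof.
move=> h; case: leqP => htc.
  by rewrite phi_cat_le ?size_nseq // phi_false // count_nseq /= mul0n addn0.
have -> : t = (size (nseq c false) + (t - c))%N by rewrite size_nseq; lia.
rewrite phi_cat_ge phi_true ?count_nseq /=; rewrite ?size_nseq; lia.
Qed.

Lemma phi_revneg Y p : (p <= size Y)%N ->
  phi (rev (map negb Y)) p = phi Y (size Y - p).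
Proof.
move=> h; rewrite /phi take_rev drop_rev size_map !count_rev -map_take -map_drop !count_map.
rewrite addnC; congr (_ + _)%N; apply: eq_count => x /=; by case: x.
Qed.

Definition Ablk (p : nat * nat) := nseq (p.2 + p.1) false ++ nseq (p.2 - p.1) true.
Definition Bblk (p : nat * nat) := nseq (p.2 - p.1) false ++ nseq (p.2 + p.1) true.

Lemma Sseq_eq fr : Sseq fr = flatten (map Ablk fr) ++ flatten (map Bblk (rev fr)).
Proof. by []. Qed.

Lemma H1_eq fr : flatten (map Ablk fr) = rev (map negb (flatten (map Bblk (rev fr)))).
Proof.
elim: fr => [|x fr IH] //=.
rewrite rev_cons map_rcons -cats1 flatten_cat map_cat rev_cat /= cats0 IH; congr (_ ++ _).
by rewrite /Bblk /Ablk map_cat !map_nseq rev_cat !rev_nseq.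
Qed.

Lemma size_H2 L : (forall p, p \in L -> p.1 <= p.2)%N ->
  size (flatten (map Bblk L)) = (2 * sumn (map snd L))%N.
Proof.
elim: L => [|x L IH] //= h.
rewrite size_cat IH; last by move=> p hp; apply: h; rewrite inE hp orbT.
have := h x (mem_head _ _); rewrite /Bblk size_cat !size_nseq; case: x {h} => a b /=; lia.
Qed.

Lemma build_match1 s1 s2 j k t2 : (j <= count negb s1)%N -> size s1 = (j + k)%N ->
  nmatch (build j (s1 ++ s2) (nseq k true ++ t2)) = (count id s1 + nmatch (build 0 s2 t2))%N.
Proof.
elim: s1 j k => [|c s1 IH] j k /=.
  move=> hj hs; have -> : j = 0%N by lia.
  by have -> : k = 0%N by lia.
have hsz := count_size negb s1.
case: c => /=.
  case: k => [|k] hj hs; first lia.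
  by rewrite /nmatch /= -/(nmatch _) IH //; lia.
case: j => [|j] /=.
  case: k => [|k] hj hs; first lia.
  by rewrite /nmatch /= -/(nmatch _) IH //; lia.
move=> hj hs.
by rewrite /nmatch /= -/(nmatch _) IH //; lia.
Qed.

Lemma nmatch_noneL t : nmatch (map (fun c => (None, Some c)) t) = 0%N.
Proof. by elim: t. Qed.

Lemma nspace_noneL t : nspace (map (fun c => (None, Some c)) t) = size t.
Proof. by elim: t => //= x t IH; rewrite /nspace /= -/(nspace _) IH. Qed.

Lemma build_match0 s M : (size s <= M)%N -> nmatch (build 0 s (nseq M false)) = count negb s.
Proof.
elim: s M => [|c s IH] M /=; first by rewrite nmatch_noneL.
case: M => [|M] //= h.
rewrite andbF /nmatch /= -/(nmatch _) IH //; by case: c.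
Qed.

Lemma build_space s t j : (j <= count negb s)%N -> (size s <= j + size t)%N ->
  nspace (build j s t) = (j + (size t - (size s - j)))%N.
Proof.
elim: s t j => [|c s IH] t j /=.
  move=> hj _; have -> : j = 0%N by lia.
  by rewrite add0n !subn0 nspace_noneL.
have hsz := count_size negb s.
case: c => /=.
  case: t => [|x t] hj hs; rewrite /= in hs *; first lia.
  rewrite /nspace /= -/(nspace _) IH //; lia.
case: j => [|j] /=.
  case: t => [|x t] hj hs; rewrite /= in hs *; first lia.
  rewrite /nspace /= -/(nspace _) IH //; lia.
move=> hj hs.
rewrite /nspace /= -/(nspace _) IH //; lia.
Qed.

Lemma ivt_count (P : pred column) al k : (k <= count P al)%N ->
  exists i, count P (take i al) = k.
Proof.
elim: al k => [|c al IH] k /=.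
  by rewrite leqn0 => /eqP ->; exists 0%N.
case: k => [|k]; first by move=> _; exists 0%N.
case hP: (P c) => /= h.
  have [i hi] := IH k h; exists i.+1; by rewrite /= hP hi.
have [i hi] := IH k.+1 h; exists i.+1; by rewrite /= hP hi.
Qed.

Lemma match_bound (b : bool) X : (forall y, y \in pmap id (map snd X) -> y = b) ->
  (nmatch X <= count (fun x => x == b) (pmap id (map fst X)))%N.
Proof.
elim: X => [|[o1 o2] X IH] //= h.
have h' : forall y, y \in pmap id (map snd X) -> y = b.
  move=> y hy; apply: h; case: o2 => [z|] /=; by rewrite ?inE hy ?orbT.
have := IH h'.
rewrite /nmatch /= -/(nmatch _).
case: o1 => [x|]; case: o2 h => [z|] h /=; try lia.
have -> : z = b by apply: h; rewrite /= inE eqxx.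
case: (x == b); lia.
Qed.

Lemma space_bound1 X :
  (size (pmap id (map snd X)) <= nspace X + size (pmap id (map fst X)))%N.
Proof.
elim: X => [|[o1 o2] X IH] //=.
rewrite /nspace /= -/(nspace _).
case: o1 => [x|]; case: o2 => [z|] /=; lia.
Qed.

Lemma space_bound2 X :
  (size (pmap id (map fst X)) <= nspace X + size (pmap id (map snd X)))%N.
Proof.
elim: X => [|[o1 o2] X IH] //=.
rewrite /nspace /= -/(nspace _).
case: o1 => [x|]; case: o2 => [z|] /=; lia.
Qed.
Local Open Scope ring_scope.

Lemma claim (R : realType) (beta : R) (L : seq (nat * nat)) : 0 <= beta ->
  (forall p, p \in L -> p.1 <= p.2)%N ->
  forall t, (t <= size (flatten (map Bblk L)))%N ->
  exists i, (i <= size L)%N /\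
    (phi (flatten (map Bblk L)) t)%:R - 2 * beta * t%:R <=
    (phi (flatten (map Bblk L)) (2 * sumn (map snd (take i L))))%:R
       - 2 * beta * (2 * sumn (map snd (take i L)))%:R :> R.
Proof.
move=> hb; elim: L => [|[a b] L IH] hL t ht.
  exists 0%N; split => //; move: ht; rewrite /= leqn0 => /eqP ->; by [].
have hab : (a <= b)%N by apply: (hL (a, b)); rewrite mem_head.
have hL' : forall p, p \in L -> (p.1 <= p.2)%N.
  by move=> p hp; apply: hL; rewrite inE hp orbT.
have hsB : size (Bblk (a, b)) = (2 * b)%N by rewrite /Bblk size_cat !size_nseq /=; lia.
set X' := flatten (map Bblk L).
have hX : flatten (map Bblk ((a, b) :: L)) = Bblk (a, b) ++ X' by [].
rewrite hX; move: ht; rewrite hX size_cat hsB => ht.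
have hoB : count id (Bblk (a, b)) = (b + a)%N.
  by rewrite /Bblk count_cat !count_nseq /= mul0n mul1n.
case: (leqP (2 * b) t) => h2b.
  have ht2 : (t - 2 * b <= size X')%N by lia.
  have [i [hi hIH]] := IH hL' (t - 2 * b)%N ht2.
  exists i.+1; split; first by rewrite /=.
  have -> : (2 * sumn [seq i.2 | i <- take i.+1 ((a, b) :: L)] =
             size (Bblk (a,b)) + 2 * sumn [seq i.2 | i <- take i L])%N.
    by rewrite hsB /=; lia.
  have et : t = (size (Bblk (a,b)) + (t - 2 * b))%N by rewrite hsB; lia.
  rewrite [in X in X - _ <= _]et !phi_cat_ge.
  move: hIH; set u := (t - 2 * b)%N; set v := (2 * sumn _)%N.
  rewrite et hsB !natrD => hIH.
  rewrite -/u; lra.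
set c := (b - a)%N; set d := (b + a)%N.
have hcd : (c + d = 2 * b)%N by rewrite /c /d; lia.
have hB : Bblk (a, b) = nseq c false ++ nseq d true by [].
have hXt : phi (Bblk (a, b) ++ X') t = ((if (t <= c)%N then c - t else t - c) + count negb X')%N.
  by rewrite phi_cat_le ?hsB ?hB ?phi_block //; [lia | lia].
have hX0 : phi (Bblk (a, b) ++ X') 0 = (c + count negb X')%N.
  rewrite phi_cat_le; last by rewrite hsB; lia.
  by rewrite hB phi_block // subn0.
have hX2 : phi (Bblk (a, b) ++ X') (2 * (b + 0)) = (d + count negb X')%N.
  by rewrite addn0 -hsB -[size _]addn0 phi_cat_ge hoB phi0.
clearbody c d.
rewrite hXt; set z := count negb X'.
case: (leqP t c) => htc.
  exists 0%N; split => //=.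
  rewrite -[X in phi _ X]/0%N hX0.
  have -> : c = (t + (c - t))%N by lia.
  rewrite addKn !natrD mulr0 subr0 -/z.
  have : 0 <= t%:R :> R by []. nra.
case: (lerP (2 * beta) 1) => hbeta.
  exists 1%N; split => //=.
  rewrite take0 /= hX2 -/z.
  have ht2 : (2 * (b + 0) = t + (c + d - t))%N by lia.
  have e1 : ((t - c)%N%:R : R) = t%:R - c%:R by rewrite natrB //; lia.
  have e2 : ((c + d - t)%N%:R : R) = c%:R + d%:R - t%:R by rewrite natrB ?natrD //; lia.
  rewrite ht2 !natrD e1 e2.
  have : t%:R <= c%:R + d%:R :> R by rewrite -natrD ler_nat; lia.
  nra.
exists 0%N; split => //=.
rewrite -[X in phi _ X]/0%N hX0 mulr0 subr0.
have -> : t = (c + (t - c))%N by lia.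
rewrite addKn !natrD.
have : 0 <= (c%:R) :> R by [].
have : 0 <= ((t - c)%N)%:R :> R by [].
nra.
Qed.
Local Close Scope ring_scope.

Lemma count_negb_map (X : seq bool) : count id (map negb X) = count negb X.
Proof. by rewrite count_map. Qed.

Lemma count_id_mapnegb (X : seq bool) : count negb (map negb X) = count id X.
Proof. by rewrite count_map; apply: eq_count => x; case: x. Qed.

Lemma take_count (X : seq bool) j : (j <= size X)%N -> (j <= count id X + count negb (take j X))%N.
Proof.
move=> h.
have h1 := count_predC id (take j X).
have h2 : (count id (take j X) <= count id X)%N.
  by rewrite -{2}(cat_take_drop j X) count_cat leq_addr.
rewrite size_take in h1.
have -> : count negb (take j X) = count (predC id) (take j X) by apply: eq_count.
move: h1; case: ltnP => hj h1; lia.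
Qed.

Lemma size_pmap_snd (X : seq column) : size (pmap id (map snd X)) = count (fun c : column => isSome c.2) X.
Proof. by elim: X => [|[o1 o2] X IH] //=; case: o2 => [z|] /=; rewrite ?IH. Qed.

Lemma count_eqtrue (X : seq bool) : count (fun x => x == true) X = count id X.
Proof. by apply: eq_count => x; case: x. Qed.
Lemma count_eqfalse (X : seq bool) : count (fun x => x == false) X = count negb X.
Proof. by apply: eq_count => x; case: x. Qed.

Local Open Scope ring_scope.

Theorem mainTheorem4 (R : realType) (q : nat) (fr : seq (nat * nat)) :
  (2 <= q)%N ->
  (forall a b : nat, ((a, b) \in fr) =
     [&& (0 < a)%N, (0 < b)%N, (a <= b)%N, coprime a b & (2 <= a + b <= q)%N]) ->
  sorted frac_lt fr ->
  forall (al : seq column), is_alignment (Sseq fr) (Tseq fr) al ->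
  forall beta : R, 0 <= beta ->
  exists r : nat, (r <= size fr)%N /\ score 0 beta al <= score 0 beta (Gamma fr r).
Proof.
move=> _ hmem _ al [hS hT _] beta hb.
have hab : forall p, p \in fr -> (p.1 <= p.2)%N.
  by case=> a b; rewrite hmem => /and5P [].
set L := rev fr.
have hL : forall p, p \in L -> (p.1 <= p.2)%N by move=> p; rewrite mem_rev; apply: hab.
set H2 := flatten (map Bblk L).
set s := sumn (map snd fr).
have hsH2 : size H2 = (2 * s)%N by rewrite size_H2 // /L map_rev sumn_rev.
have hN : (nlen fr %/ 2 = 2 * s)%N.
  by rewrite /nlen -/s (_ : (4 * s = (2 * s) * 2)%N) ?mulnK //; lia.
have hTe : Tseq fr = nseq (2 * s) true ++ nseq (2 * s) false by rewrite /Tseq hN.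
have hSe : Sseq fr = rev (map negb H2) ++ H2 by rewrite Sseq_eq H1_eq.
set N := (2 * s)%N.
set z2 := count negb H2.
have hsH1 : size (rev (map negb H2)) = N by rewrite size_rev size_map.
have hsS : size (Sseq fr) = (2 * N)%N by rewrite hSe size_cat hsH1 hsH2; lia.
have Fright : forall t, phi (Sseq fr) (N + t) = (z2 + phi H2 t)%N.
  move=> t; rewrite hSe -{1}hsH1 phi_cat_ge count_rev count_negb_map //.
have Fleft : forall p, (p <= N)%N -> phi (Sseq fr) p = (z2 + phi H2 (N - p))%N.
  by move=> p hp; rewrite hSe phi_cat_le ?hsH1 // phi_revneg ?hsH2 // addnC.
have hG : forall r, let j := jidx fr r in
    nmatch (Gamma fr r) = (z2 + phi H2 j)%N /\ nspace (Gamma fr r) = (2 * j)%N.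
  move=> r j.
  have hj : (j <= N)%N.
    rewrite /j /jidx /N /s -{2}(cat_take_drop r fr) map_cat sumn_cat; lia.
  have hnegS : count negb (Sseq fr) = N.
    rewrite hSe count_cat count_rev count_id_mapnegb.
    by have := count_predC id H2; rewrite hsH2 /N => <-; congr (_ + _)%N; apply: eq_count.
  split.
    rewrite /Gamma -/j hTe -(cat_take_drop (N + j) (Sseq fr)).
    rewrite build_match1 ?build_match0.
    - by rewrite -Fright.
    - by rewrite size_drop hsS; lia.
    - rewrite hSe take_cat hsH1 ltnNge leq_addr /= count_cat count_rev count_id_mapnegb addKn.
      by apply: take_count; rewrite hsH2.
    - by rewrite size_take hsS; case: ltnP; lia.
  rewrite /Gamma -/j hTe build_space.
  - rewrite size_cat !size_nseq hsS /N; lia.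
  - by rewrite hnegS.
  - by rewrite size_cat !size_nseq hsS /N; lia.
pose P := fun c : column => isSome c.2.
have hcP : count P al = (2 * N)%N by rewrite -size_pmap_snd hT hTe size_cat !size_nseq; lia.
have [i hi] : exists i, count P (take i al) = N by apply: ivt_count; rewrite hcP; lia.
set al1 := take i al; set al2 := drop i al.
have hal : al = al1 ++ al2 by rewrite cat_take_drop.
have [hT1 hT2] : pmap id (map snd al1) = nseq N true /\ pmap id (map snd al2) = nseq N false.
  move: hT; rewrite hTe {1}hal map_cat pmap_cat => /eqP; rewrite eqseq_cat; last by rewrite size_pmap_snd hi size_nseq.
  by case/andP => /eqP -> /eqP ->.
set S1 := pmap id (map fst al1); set S2 := pmap id (map fst al2).
have hS12 : Sseq fr = S1 ++ S2 by rewrite -hS {1}hal map_cat pmap_cat.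
set pp := size S1.
have hpp0 : (pp <= 2 * N)%N by rewrite -hsS hS12 size_cat leq_addr.
have hsS2 : size S2 = (2 * N - pp)%N by rewrite -hsS hS12 size_cat addKn.
have hw : (nmatch al <= phi (Sseq fr) pp)%N.
  rewrite hal /nmatch count_cat -!/(nmatch _) /phi hS12 take_size_cat // drop_size_cat //.
  rewrite -count_eqtrue -count_eqfalse leq_add //; apply: match_bound;
    [rewrite hT1 | rewrite hT2] => y; rewrite mem_nseq => /andP [_ /eqP] //.
have hy : (nspace al = nspace al1 + nspace al2)%N by rewrite {1}hal /nspace count_cat.
have b1 := space_bound1 al1; have b2 := space_bound2 al1.
have b3 := space_bound1 al2; have b4 := space_bound2 al2.
rewrite hT1 hT2 !size_nseq -/S1 -/S2 -/pp in b1 b2 b3 b4.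
rewrite hsS2 in b3 b4.
have [t [htN hF ht2]] : exists t, [/\ (t <= N)%N, phi (Sseq fr) pp = (z2 + phi H2 t)%N
     & (2 * t <= nspace al)%N].
  case: (leqP pp N) => hpN.
    exists (N - pp)%N; split; [lia | by rewrite Fleft | lia].
  exists (pp - N)%N; split; [lia | | lia].
  by rewrite -{1}(subnKC (ltnW hpN)) Fright.
have ht3 : (t <= size H2)%N by rewrite hsH2.
have [i0 [hi0 hc]] := @claim R beta L hb hL t ht3.
exists (size fr - i0)%N; split; first by rewrite leq_subr.
have hjeq : jidx fr (size fr - i0) = (2 * sumn (map snd (take i0 L)))%N.
  by rewrite /jidx /L take_rev map_rev sumn_rev.
have [hGm hGs] := hG (size fr - i0)%N.
rewrite hjeq in hGm hGs.
rewrite /score hGm hGs !mul0r !subr0.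
have hwR : (nmatch al)%:R <= (z2 + phi H2 t)%:R :> R by rewrite ler_nat -hF.
have hyR : (2 * t)%:R <= (nspace al)%:R :> R by rewrite ler_nat.
move: hc hwR hyR.
rewrite -/H2.
set jj := (2 * sumn (map snd (take i0 L)))%N.
set u := phi H2 t. set v := phi H2 jj. set w := nmatch al. set y := nspace al.
clearbody u v w y jj z2.
rewrite !natrD !addr0.
nra.
Qed.
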